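(* Let $\{A_n\}_{n\geq1}$ be an increasing sequence of finite sets of isolated points of $\mathbb{R}^2$ with $f(n)=\sharp A_n\to+\infty$, $S=\bigcup_n A_n$, and $\{Z(x):x\in S\}$ a random field whose variables all have distribution function $F$. Let $\tau>0$ and $\{u_n(\tau)\}$ be reals with $E\big(\sum_{x\in A_n}\mathbf{1}_{\{Z(x)>u_n(\tau)\}}\big)\to\tau$. For each $n$ let $\mathcal{B}_n=\{B_n^{(s,t)}:s,t=1,\dots,k_n\}$ be a family of $k_n^2$ pairwise disjoint subsets of $A_n$ with $\sharp B_n^{(s,t)}\sim f(n)/k_n^2$ and $P(\bigvee_{x\in A_n}Z(x)\le u_n(\tau))-\prod_{s,t}P(\bigvee_{x\in B_n^{(s,t)}}Z(x)\le u_n(\tau))\to0$. Suppose $\mathbf{Z}_A=\{Z(x):x\in A_n\}_{n\ge1}$ satisfies conditions $D'(u_n(\tau),\mathcal{B}_n)$ and $D(u_n(\tau),k_n,l_n)$. Then $$P\Big(\bigvee_{x\in A_n}Z(x)\le u_n(\tau)\Big)\longrightarrow e^{-\tau}\quad(n\to\infty).$$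
   Context: $\bigvee$ is maximum; $\pi_1,\pi_2$ coordinate projections; $f_i(n)=\sharp\pi_i(A_n)$. Condition $D'(u_n,\mathcal B_n)$: $\sum_{B\in\mathcal B_n}\sum_{x,y\in B,\,x\neq y}P(Z(x)>u_n,Z(y)>u_n)\to0$ as $n\to\infty$. The pair $(I,J)$ is in $\mathcal{S}(\pi_i(A_n),l_n)$ if $I,J$ are sets of consecutive values of $\pi_i(A_n)$ separated by at least $l_n$ values of $\pi_i(A_n)$. Condition $D(u_n,k_n,l_n)$: there are positive integer sequences $l_n\to\infty$, $k_n\to\infty$ with $k_nl_nf_i(n)/f(n)\to0$ ($i=1,2$) and $k_n^2\alpha(l_n,u_n)\to0$, where $\alpha(l_n,u_n)=\sup|P(\bigvee_{x\in C\cup D}Z(x)\le u_n)-P(\bigvee_{x\in C}Z(x)\le u_n)P(\bigvee_{x\in D}Z(x)\le u_n)|$ over subsets $C,D\subseteq A_n$ whose $\pi_i$-projections form a pair in $\mathcal{S}(\pi_i(A_n),l_n)$ for each $i$. *)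

(* Defs.v *)
From HB Require Import structures.
From mathcomp Require Import all_boot all_order all_algebra.
From mathcomp Require Import finmap.
From mathcomp Require Import all_classical all_reals all_analysis.

Set Implicit Arguments.
Unset Strict Implicit.
Unset Printing Implicit Defensive.

Import Order.TTheory GRing.Theory Num.Theory numFieldNormedType.Exports.
Local Open Scope ring_scope.
Local Open Scope classical_set_scope.
Local Open Scope fset_scope.

Definition tends_infty (v : nat -> nat) : Prop :=
  forall M : nat, exists N : nat, forall n : nat, (N <= n)%N -> (M <= v n)%N.

Definition pr d (T : measurableType d) (R : realType) (P : probability T R)
  (E : set T) : R := fine (P E).

Definition max_le d (T : measurableType d) (R : realType)
  (Z : R * R -> T -> R) (C : {fset (R * R)}) (u : R) : set T :=
  [set w | forall x, x \in C -> Z x w <= u].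

Definition exceed d (T : measurableType d) (R : realType)
  (Z : R * R -> T -> R) (u : R) (x : R * R) : set T :=
  [set w | u < Z x w].

Definition count_exceed d (T : measurableType d) (R : realType)
  (Z : R * R -> T -> R) (C : {fset (R * R)}) (u : R) (w : T) : R :=
  \sum_(x <- C) ((u < Z x w)%R : bool)%:R.

Definition proj1s (R : realType) (C : {fset (R * R)}) : {fset R} :=
  [fset x.1 | x in C].
Definition proj2s (R : realType) (C : {fset (R * R)}) : {fset R} :=
  [fset x.2 | x in C].

Definition consecutive (R : realType) (X I : {fset R}) : Prop :=
  I `<=` X /\
  forall a b c, a \in I -> b \in I -> c \in X -> a <= c <= b -> c \in I.

Definition separated_by (R : realType) (X : {fset R}) (l : nat)
  (I J : {fset R}) : Prop :=
  forall a b, a \in I -> b \in J ->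
    a < b /\ (l <= #|` [fset c in X | (a < c < b)%R]|)%N.

Definition sep_pair (R : realType) (X : {fset R}) (l : nat)
  (I J : {fset R}) : Prop :=
  consecutive X I /\ consecutive X J /\
  (separated_by X l I J \/ separated_by X l J I).

Definition alpha d (T : measurableType d) (R : realType) (P : probability T R)
  (Z : R * R -> T -> R) (A : {fset (R * R)}) (l : nat) (u : R) : R :=
  sup [set r : R | exists C D : {fset (R * R)},
        [/\ C `<=` A, D `<=` A,
            sep_pair (proj1s A) l (proj1s C) (proj1s D),
            sep_pair (proj2s A) l (proj2s C) (proj2s D) &
            r = `| pr P (max_le Z (C `|` D) u)
                   - pr P (max_le Z C u) * pr P (max_le Z D u) | ] ].

Definition condD' d (T : measurableType d) (R : realType) (P : probability T R)
  (Z : R * R -> T -> R) (u : nat -> R) (k : nat -> nat)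
  (B : nat -> nat -> nat -> {fset (R * R)}) : Prop :=
  (fun n => \sum_(s < k n) \sum_(t < k n) \sum_(x <- B n s t)
      \sum_(y <- B n s t | x != y)
        pr P (exceed Z (u n) x `&` exceed Z (u n) y)) @ \oo --> (0 : R).

(* Condition D(u_n, k_n, l_n) (the l_n being existentially quantified) *)
Definition condD d (T : measurableType d) (R : realType) (P : probability T R)
  (Z : R * R -> T -> R) (A : nat -> {fset (R * R)}) (u : nat -> R)
  (k : nat -> nat) : Prop :=
  exists l : nat -> nat,
    [/\ (forall n, 0 < l n)%N, (forall n, 0 < k n)%N,
        tends_infty l, tends_infty k &
      [/\
        (fun n => (k n * l n * #|` proj1s (A n)|)%:R / (#|` A n|)%:R)
           @ \oo --> (0 : R),
        (fun n => (k n * l n * #|` proj2s (A n)|)%:R / (#|` A n|)%:R)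
           @ \oo --> (0 : R) &
        (fun n => ((k n) ^ 2)%:R * alpha P Z (A n) (l n) (u n))
           @ \oo --> (0 : R)]].

(* Main.v *)
Require Import Defs.
From HB Require Import structures.
From mathcomp Require Import all_boot all_order all_algebra.
From mathcomp Require Import finmap.
From mathcomp Require Import all_classical all_reals all_analysis.
From mathcomp Require Import lra ring.

Import Order.TTheory GRing.Theory Num.Theory numFieldNormedType.Exports.
Local Open Scope ring_scope.
Local Open Scope classical_set_scope.

Section prob.
Context d (T : measurableType d) (R : realType) (P : probability T R).

Lemma prE (A : set T) : measurable A -> P A = (pr P A)%:E.
Proof. by move=> mA; rewrite /pr fineK //; exact: fin_num_measure. Qed.

Lemma pr_ge0 A : 0 <= pr P A.
Proof. by rewrite /pr fine_ge0. Qed.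

Lemma pr_le A B : measurable A -> measurable B -> A `<=` B -> pr P A <= pr P B.
Proof. by move=> mA mB AB; rewrite -lee_fin -!prE //; apply: le_measure => //; rewrite inE. Qed.

Lemma pr_le1 A : measurable A -> pr P A <= 1.
Proof. by move=> mA; rewrite -lee_fin -prE //; apply: probability_le1. Qed.

Lemma prD A B : measurable A -> measurable B ->
  pr P (A `\` B) = pr P A - pr P (A `&` B).
Proof.
move=> mA mB; apply: EFin_inj; rewrite EFinB -!prE //; last by apply: measurableD.
  by rewrite measureD // (le_lt_trans (probability_le1 _ mA)) // ltey.
exact: measurableI.
Qed.

Lemma prC A : measurable A -> pr P (~` A) = 1 - pr P A.
Proof.
move=> mA; apply: EFin_inj; rewrite EFinB -!prE //; last exact: measurableC.
by rewrite probability_setC.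
Qed.

Lemma prT : pr P setT = 1.
Proof. by rewrite /pr probability_setT. Qed.

End prob.


Section bonf.
Context d (T : measurableType d) (R : realType) (P : probability T R).
Context (Z : R * R -> T -> R).
Context (mZ : forall x, measurable_fun setT (Z x)).
Context (u : R).

Definition Ms (s : seq (R * R)) : set T := [set w | forall x, x \in s -> Z x w <= u].
Let E x := exceed Z u x.

Lemma mE x : measurable (E x).
Proof.
have := mZ x measurableT _ (measurable_itv `]u, +oo[%R).
rewrite setTI; congr measurable; apply/seteqP; split => w /=;
  by rewrite in_itv /= andbT.
Qed.

Lemma MsC x s : Ms (x :: s) = Ms s `\` E x.
Proof.
apply/seteqP; split => w /=.
  move=> H; split; first by move=> y ys; apply: H; rewrite inE ys orbT.
  by rewrite /E /exceed /= ltNge H // mem_head.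
move=> [H1 H2] y; rewrite inE => /orP [/eqP ->|ys]; last exact: H1.
by rewrite leNgt; apply/negP => h; apply: H2.
Qed.

Lemma mMs s : measurable (Ms s).
Proof.
elim: s => [|x s IH].
  by rewrite (_ : Ms [::] = setT) //; apply/seteqP; split => w //= _ x; rewrite in_nil.
by rewrite MsC; apply: measurableD (mE x).
Qed.

Lemma bonf_low G s : measurable G ->
  pr P G - \sum_(y <- s) pr P (G `&` E y) <= pr P (G `&` Ms s).
Proof.
move=> mG; elim: s => [|y s IH].
  rewrite big_nil subr0 (_ : G `&` Ms [::] = G) //.
  by apply/seteqP; split => [w []//|w Gw]; split => // x; rewrite in_nil.
rewrite MsC setIDA prD //; last exact: mE.
  2: by apply: measurableI => //; exact: mMs.
rewrite big_cons.
have : pr P (G `&` Ms s `&` E y) <= pr P (G `&` E y).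
  apply: pr_le.
  - by apply: measurableI; [apply: measurableI => //; exact: mMs|exact: mE].
  - by apply: measurableI => //; exact: mE.
  - by move=> w [[]].
lra.
Qed.

Lemma bonf_low1 s : 1 - \sum_(y <- s) pr P (E y) <= pr P (Ms s).
Proof.
have := @bonf_low setT s measurableT; rewrite prT setTI.
by under eq_bigr do rewrite setTI.
Qed.

Lemma bonf_up s : uniq s -> pr P (Ms s) <= 1 - \sum_(y <- s) pr P (E y) +
  \sum_(x <- s) \sum_(y <- s | x != y) pr P (E x `&` E y).
Proof.
elim: s => [|x s IH].
  by rewrite !big_nil (_ : Ms [::] = setT) ?prT ?subr0 ?addr0 //;
     apply/seteqP; split => w //= _ y; rewrite in_nil.
rewrite /= => /andP [xs us].
rewrite MsC prD //; [|exact: mMs|exact: mE].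
have h1 := @bonf_low (E x) s (mE x).
have h2 := IH us.
rewrite setIC.
rewrite big_cons big_cons.
have -> : \sum_(y <- x :: s | x != y) pr P (E x `&` E y) =
          \sum_(y <- s) pr P (E x `&` E y).
  rewrite big_cons eqxx /= big_seq_cond [RHS]big_seq_cond; apply: eq_bigl => y.
  by case ys: (y \in s) => //=; apply/eqP => h; move: xs; rewrite h ys.
have : \sum_(i <- s) \sum_(y <- s | i != y) pr P (E i `&` E y) <=
       \sum_(i <- s) \sum_(y <- x :: s | i != y) pr P (E i `&` E y).
  apply: ler_sum => i _; rewrite big_cons; case: ifP => _ //.
  by rewrite lerDr pr_ge0.
lra.
Qed.

End bonf.


Section expect.
Context d (T : measurableType d) (R : realType) (P : probability T R).
Context (Z : R * R -> T -> R).
Context (mZ : forall x, measurable_fun setT (Z x)).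
Context (u : R).

Lemma E_count (C : {fset (R * R)}) :
  ('E_P[count_exceed Z C u] = (\sum_(x <- C) pr P (exceed Z u x))%:E)%E.
Proof.
rewrite unlock /count_exceed.
transitivity (\int[P]_w (\sum_(x <- C) (\1_(exceed Z u x) w)%:E))%E.
  apply: eq_integral => w _; rewrite sumEFin; congr EFin; apply: eq_bigr => x _.
  rewrite indicE; case: (boolP (u < Z x w)) => h; first by rewrite mem_set.
  by rewrite memNset //=; apply/negP.
rewrite (@ge0_integral_sum _ _ _ P setT _ _ (fun x w => (\1_(exceed Z u x) w)%:E)) //.
- rewrite -sumEFin; apply: eq_bigr => x _.
  by rewrite integral_indic // ?setIT -?prE //; exact: mE.
- move=> x; apply/measurable_realfun.measurable_EFinP; apply: measurable_realfun.measurable_indic; exact: mE.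

Qed.

End expect.


Section core.
Context (R : realType).

Lemma expR_low (a : R) : 0 <= a <= 1/2 -> expR (- a - 2 * a ^+ 2) <= 1 - a.
Proof.
move=> /andP [a0 a1].
have h := expR_ge1Dx (a + 2 * a ^+ 2).
have hp : 0 < expR (a + 2 * a ^+ 2) := expR_gt0 _.
rewrite -opprD expRN.
rewrite -[_^-1]mul1r ler_pdivrMr //.
have : 1 <= (1 - a) * (1 + (a + 2 * a ^+ 2)) by nra.
have : (1 - a) * (1 + (a + 2 * a ^+ 2)) <= (1 - a) * expR (a + 2 * a ^+ 2).
  by apply: ler_wpM2l => //; lra.
lra.
Qed.

Lemma expR_up (a b p : R) : p <= 1 - a + b -> p <= expR (- a + b).
Proof. by move=> h; apply: (le_trans h); rewrite -addrA expR_ge1Dx. Qed.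

End core.

Section core2.
Context (R : realType).

Lemma nearP (Q : nat -> Prop) :
  (\forall n \near \oo, Q n) <-> exists N, forall n, (N <= n)%N -> Q n.
Proof.
split; first by move=> [N _ HN]; exists N => n hn; exact: HN.
by move=> [N HN]; exists N => // n /= hn; exact: HN.
Qed.

Lemma prod_cvg (k : nat -> nat) (a b p : nat -> nat -> nat -> R) (m : nat -> R) (tau : R) :
  (fun n => \sum_(s < k n) \sum_(t < k n) a n s t) @ \oo --> tau ->
  (fun n => \sum_(s < k n) \sum_(t < k n) b n s t) @ \oo --> 0 ->
  m @ \oo --> 0 ->
  (\forall n \near \oo, forall s t, (s < k n)%N -> (t < k n)%N -> 0 <= a n s t <= m n) ->
  (forall n s t, (s < k n)%N -> (t < k n)%N ->
     0 <= p n s t /\ 1 - a n s t <= p n s t <= 1 - a n s t + b n s t) ->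
  (fun n => \prod_(s < k n) \prod_(t < k n) p n s t) @ \oo --> expR (- tau).
Proof.
move=> Ha Hb Hm Ham Hp.
pose Sa n := \sum_(s < k n) \sum_(t < k n) a n s t.
pose Sb n := \sum_(s < k n) \sum_(t < k n) b n s t.
pose Sa2 n := \sum_(s < k n) \sum_(t < k n) a n s t ^+ 2.
have [N1 HN1] : exists N, forall n, (N <= n)%N -> m n <= 1/2.
  apply/nearP; move/cvgrPdist_lt: Hm => /(_ (1/2)) H.
  have : \forall n \near \oo, `|0 - m n| < 1/2 by apply: H; lra.
  by apply: filterS => n; rewrite sub0r normrN => /ltW /(le_trans (ler_norm _)).
have [N2 HN2] := proj1 (nearP _) Ham.
have HS2 : Sa2 @ \oo --> 0.
  apply: (@squeeze_cvgr _ _ _ _ (fun _ => 0) (fun n => m n * Sa n)).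
  - apply/nearP; exists N2 => n hn; apply/andP; split.
      by apply: sumr_ge0 => s _; apply: sumr_ge0 => t _; apply: sqr_ge0.
    rewrite /Sa2 /Sa mulr_sumr; apply: ler_sum => s _; rewrite mulr_sumr.
    apply: ler_sum => t _; have /andP [h1 h2] := HN2 n hn s t (ltn_ord s) (ltn_ord t).
    by rewrite expr2 ler_wpM2r.
  - exact: cvg_cst.
  - by rewrite -(mul0r tau); apply: cvgM.
have Hlow : (fun n => - Sa n - 2 * Sa2 n) @ \oo --> - tau.
  rewrite -[X in _ --> X]subr0 -(mulr0 2); apply: cvgB; first exact: cvgN.
  exact: cvgMr.
have Hup : (fun n => - Sa n + Sb n) @ \oo --> - tau.
  rewrite -[X in _ --> X]addr0; apply: cvgD; first exact: cvgN.
  exact: Hb.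
apply: (@squeeze_cvgr _ _ _ _ (fun n => expR (- Sa n - 2 * Sa2 n))
         (fun n => expR (- Sa n + Sb n))).
- apply/nearP; exists (maxn N1 N2) => n; rewrite geq_max => /andP [hn1 hn2].
  apply/andP; split.
  + rewrite /Sa /Sa2 -sumrN mulr_sumr -sumrB expR_sum.
    apply: ler_prod => s _; apply/andP; split; first exact: expR_ge0.
    rewrite -sumrN mulr_sumr -sumrB expR_sum.
    apply: ler_prod => t _; rewrite expR_ge0 /=.
    have /andP [h1 h2] := HN2 n hn2 s t (ltn_ord s) (ltn_ord t).
    have [_ /andP [h3 _]] := Hp n s t (ltn_ord s) (ltn_ord t).
    apply: le_trans h3; apply: expR_low.
    by rewrite h1 /= (le_trans h2) // HN1.
  + rewrite /Sa /Sb -sumrN -big_split expR_sum.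
    apply: ler_prod => s _; apply/andP; split.
      by apply: prodr_ge0 => t _; have [] := Hp n s t (ltn_ord s) (ltn_ord t).
    rewrite -sumrN -big_split expR_sum.
    apply: ler_prod => t _.
    have [h0 /andP [_ h3]] := Hp n s t (ltn_ord s) (ltn_ord t).
    by rewrite h0 /=; apply: expR_up.
- by apply: continuous_cvg; [exact: continuous_expR|exact: Hlow].
- by apply: continuous_cvg; [exact: continuous_expR|exact: Hup].
Qed.

End core2.


Lemma sum_constC (R : realType) (C : {fset (R * R)}) (c : R) :
  \sum_(x <- C) c = (#|` C|)%:R * c.
Proof.
by rewrite card_fset_sum1 natr_sum mulr_suml; apply: eq_bigr => _ _; rewrite mul1r.
Qed.

Lemma inv_cvg0 (R : realType) (h : nat -> nat) : tends_infty h ->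
  (fun n => ((h n)%:R : R)^-1) @ \oo --> 0.
Proof.
move=> Hh; apply/cvgrPdist_lt => e e0.
have [N0 _ HN0] := near_infty_natSinv_lt (PosNum e0).
have [N HN] := Hh N0.+1.
apply/nearP; exists N => n hn; rewrite sub0r normrN.
have hn' := HN n hn.
case E: (h n) hn' => [|j] //= hj.
rewrite ger0_norm // -E.
by have := HN0 j hj; rewrite /= E.
Qed.


Local Open Scope fset_scope.

Theorem proposition3p2 (R : realType) (d : measure_display)
  (T : measurableType d) (P : probability T R)
  (A : nat -> {fset (R * R)}) (Z : R * R -> T -> R)
  (tau : R) (u : nat -> R) (k : nat -> nat)
  (B : nat -> nat -> nat -> {fset (R * R)}) :
  (* increasing sequence of finite sets, f(n) -> +oo *)
  (forall n, A n `<=` A n.+1) ->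
  tends_infty (fun n => #|` A n|) ->
  (* points of S = \bigcup_n A_n are isolated in S *)
  (forall x, (exists n, x \in A n) ->
     exists2 e : R, 0 < e & forall y, (exists n, y \in A n) ->
       `|y.1 - x.1| < e -> `|y.2 - x.2| < e -> y = x) ->
  (* random field with common distribution function *)
  (forall x, measurable_fun setT (Z x)) ->
  (exists F : R -> R, forall x, (exists n, x \in A n) ->
     forall t, pr P [set w | Z x w <= t] = F t) ->
  0 < tau ->
  ('E_P[count_exceed Z (A n) (u n)] @[n --> \oo] --> tau%:E)%E ->
  (* the block families B_n *)
  (forall n s t, (s < k n)%N -> (t < k n)%N -> B n s t `<=` A n) ->
  (forall n s t s' t', (s < k n)%N -> (t < k n)%N -> (s' < k n)%N ->
     (t' < k n)%N -> (s, t) != (s', t') -> B n s t `&` B n s' t' = fset0) ->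
  (forall e : R, 0 < e -> exists N : nat, forall n s t, (N <= n)%N ->
     (s < k n)%N -> (t < k n)%N ->
     `| (#|` B n s t| * (k n) ^ 2)%:R / (#|` A n|)%:R - 1 | < e) ->
  (fun n => pr P (max_le Z (A n) (u n))
     - \prod_(s < k n) \prod_(t < k n) pr P (max_le Z (B n s t) (u n)))
     @ \oo --> (0 : R) ->
  condD' P Z u k B ->
  condD P Z A u k ->
  (fun n => pr P (max_le Z (A n) (u n))) @ \oo --> expR (- tau).
Proof.
move=> Ainc Hf Hiso mZ [F HF] tau0 HE HBA HBdisj HBcard Hprod HD'
  [l [l0 k0 Hl Hk [_ _ _]]].
pose f n := #|` A n|.
pose q n := 1 - F (u n).
have Hq : forall n x, x \in A n -> pr P (exceed Z (u n) x) = q n.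
  move=> n x xA.
  rewrite -[exceed _ _ _]setCK prC; last exact/measurableC/mE.
  rewrite /q -(HF x _ (u n)); last by exists n.
  congr (1 - pr P _); apply/seteqP; split => w /=.
    by rewrite /exceed /= => /negP; rewrite -leNgt.
  by rewrite /exceed /= leNgt => /negP.
have HsumC : forall n C, C `<=` A n ->
    \sum_(x <- C) pr P (exceed Z (u n) x) = (#|` C|)%:R * q n.
  move=> n C CA; rewrite -sum_constC; apply: eq_big_seq => x xC.
  by apply: Hq; exact: (fsubsetP CA).
pose g n := (f n)%:R * q n.
have Hg : g @ \oo --> tau.
  have e : fine \o (fun n => 'E_P[count_exceed Z (A n) (u n)])%E =1 g.
    by move=> n; rewrite /comp E_count // HsumC.
  have H := fine_cvg HE; rewrite (eq_cvg _ _ e) in H.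
  exact: H.
pose a n s t := (#|` B n s t|)%:R * q n.
pose b n s t := \sum_(x <- B n s t) \sum_(y <- B n s t | x != y)
   pr P (exceed Z (u n) x `&` exceed Z (u n) y).
pose p n s t := pr P (max_le Z (B n s t) (u n)).
have Hp : forall n s t, (s < k n)%N -> (t < k n)%N ->
   (0 <= p n s t /\ 1 - a n s t <= p n s t <= 1 - a n s t + b n s t)%R.
  move=> n s t hs ht; have BA := HBA n s t hs ht.
  have -> : p n s t = pr P (@Ms _ _ _ Z (u n) (B n s t)) by [].
  split; first exact: pr_ge0.
  rewrite /a -HsumC //; apply/andP; split; first exact: bonf_low1.
  exact: bonf_up (fset_uniq _).
have [N0 HN0] := Hf 1%N.
have fpos : forall n, (N0 <= n)%N -> (0 < f n)%N by move=> n /HN0.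
have qpos : forall n, (N0 <= n)%N -> 0 <= q n.
  move=> n /fpos; rewrite /f cardfs_gt0 => /fset0Pn [x xA].
  by rewrite -(Hq n x xA) pr_ge0.
have kpos : forall n, (0 < ((k n) ^ 2)%:R :> R)%R.
  by move=> n; rewrite ltr0n expn_gt0 k0.
pose m n := (2 * g n * (((k n) ^ 2)%:R)^-1)%R.
have Hm : m @ \oo --> 0.
  rewrite (_ : 0 = 2 * tau * 0)%R; last by rewrite mulr0.
  apply: cvgM; first exact: cvgMr.
  apply: inv_cvg0 => M; have [N HN] := Hk M; exists N => n /HN hn.
  by apply: leq_trans hn _; exact: leq_pmulr (k0 n).
have Ham : \forall n \near \oo, forall s t, (s < k n)%N -> (t < k n)%N ->
    (0 <= a n s t <= m n)%R.
  have [N HN] := HBcard 1 ltr01.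
  apply/nearP; exists (maxn N N0) => n; rewrite geq_max => /andP [hn hn0] s t hs ht.
  have h := HN n s t hn hs ht.
  have hq := qpos n hn0.
  have hf : (0 < (f n)%:R :> R)%R by rewrite ltr0n fpos.
  have hk := kpos n.
  rewrite /a mulr_ge0 //=.
  rewrite /m /g ler_pdivlMr //.
  move: h; rewrite natrM -/(f n) => h.
  have h1 : ((#|` B n s t|)%:R * ((k n) ^ 2)%:R / (f n)%:R < 2 :> R)%R.
    by move: h; rewrite ltr_norml; lra.
  move: h1; rewrite ltr_pdivrMr // => h1.
  nra.
pose rr n : R := ((\sum_(s < k n) \sum_(t < k n) (#|` B n s t|)%:R) / (f n)%:R)%R.
have Hrr : rr @ \oo --> (1 : R).
  apply/cvgrPdist_lt => e e0.
  have [N HN] := HBcard (e / 2)%R (divr_gt0 e0 (ltr0Sn _ 1)).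
  apply/nearP; exists (maxn N N0) => n; rewrite geq_max => /andP [hn hn0].
  have hf : (0 < (f n)%:R :> R)%R by rewrite ltr0n fpos.
  have hk := kpos n.
  set c := (((k n) ^ 2)%:R : R).
  have hsum1 : (\sum_(s < k n) \sum_(t < k n) c^-1 = 1 :> R)%R.
    under eq_bigr do rewrite sumr_const card_ord.
    rewrite sumr_const card_ord -mulrnA -mulr_natr -[(k n * k n)%N]/(k n ^ 2)%N.
    by rewrite mulVf // gt_eqF.
  rewrite distrC.
  have -> : (rr n - 1 = \sum_(s < k n) \sum_(t < k n)
        ((#|` B n s t|)%:R / (f n)%:R - c^-1))%R.
    rewrite -[in LHS]hsum1 /rr mulr_suml -sumrB; apply: eq_bigr => s _.
    by rewrite mulr_suml -sumrB.
  apply: (le_lt_trans (ler_norm_sum _ _ _)).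
  apply: (@le_lt_trans _ _ (\sum_(s < k n) \sum_(t < k n) (c^-1 * (e / 2)))%R).
    apply: ler_sum => s _; apply: (le_trans (ler_norm_sum _ _ _)).
    apply: ler_sum => t _.
    have h := HN n s t hn (ltn_ord s) (ltn_ord t).
    rewrite natrM -/(f n) in h.
    have -> : ((#|` B n s t|)%:R / (f n)%:R - c^-1 =
       c^-1 * ((#|` B n s t|)%:R * c / (f n)%:R - 1) :> R)%R.
      by field; rewrite gt_eqF //= pnatr_eq0 -lt0n k0.
    rewrite normrM ger0_norm ?invr_ge0 ?ltW //.
    by rewrite ltr_pM2l ?invr_gt0.
  under eq_bigr do rewrite -mulr_suml.
  rewrite -mulr_suml hsum1 mul1r.
  lra.
have Hsa : (fun n => \sum_(s < k n) \sum_(t < k n) a n s t) @ \oo --> tau.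
  have Hrg : (fun n => rr n * g n)%R @ \oo --> tau.
    by rewrite -[tau]mul1r; apply: cvgM.
  apply: cvg_trans Hrg.
  apply: near_eq_cvg; apply/nearP; exists N0 => n hn0.
  have hf : (0 < (f n)%:R :> R)%R by rewrite ltr0n fpos.
  rewrite /rr /g /a mulrA divfK ?gt_eqF // mulr_suml; apply: eq_bigr => s _.
  by rewrite mulr_suml.
have Hpc := @prod_cvg R k a b p m tau Hsa HD' Hm Ham Hp.
rewrite -[expR (- tau)]add0r.
have -> : (fun n => pr P (max_le Z (A n) (u n))) =
  ((fun n => pr P (max_le Z (A n) (u n))
     - \prod_(s < k n) \prod_(t < k n) pr P (max_le Z (B n s t) (u n))) +
   (fun n => \prod_(s < k n) \prod_(t < k n) p n s t))%R.
  by apply/funext => n /=; rewrite subrK.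
exact: cvgD.
Qed.
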